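(* Let $\star$ be a Weyl star product on $C^\infty(\mathbb R^N)[[\alpha]]$ satisfying the stability of unity. Then for every $n\ge2$, all indices $i_1,\dots,i_n$ and every $f$, $$\sum_{k=1}^nA\Big(x^{i_k},\ \prod_{l\ne k}x^{i_l},\ f\Big)=0,$$ where $\prod_{l\ne k}x^{i_l}$ is the ordinary product of the coordinate functions $x^{i_l}$ with $l\ne k$.
   Context: Work on $\mathbb R^N$ with real coordinates $x^1,\dots,x^N$. Functions are complex-valued smooth functions on $\mathbb R^N$. A star product is a $\mathbb C[[\alpha]]$-bilinear map on $C^\infty(\mathbb R^N)[[\alpha]]$ (formal power series in the real formal parameter $\alpha$). On functions it is given by $f\star g=fg+\sum_{r\ge1}(i\alpha)^rC_r(f,g)$, where the $C_r$ are bilinear bidifferential operators. The associator is $A(f,g,h)=f\star(g\star h)-(f\star g)\star h$. Definitions: - Weyl star product: for every $n\ge1$, all indices $i_1,\dots,i_n$ and all $f$, $$(x^{i_1}\cdots x^{i_n})\star f=\frac1{n!}\sum_{\sigma\in S_n}x^{i_{\sigma(1)}}\star\big(x^{i_{\sigma(2)}}\star(\cdots\star(x^{i_{\sigma(n)}}\star f)\cdots)\big),$$ where $x^{i_1}\cdots x^{i_n}$ denotes the ordinary product. - Stability of unity: $f\star1=1\star f=f$ for all $f$. *)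

(* Defs.v *)
From Stdlib Require Import Reals List Arith.
Import ListNotations.
Open Scope R_scope.

Definition C : Type := (R * R)%type.
Definition C0 : C := (0, 0).
Definition C1 : C := (1, 0).
Definition Ci : C := (0, 1).
Definition Cadd (z w : C) : C := (fst z + fst w, snd z + snd w).
Definition Copp (z : C) : C := (- fst z, - snd z).
Definition Cmul (z w : C) : C :=
  (fst z * fst w - snd z * snd w, fst z * snd w + snd z * fst w).
Definition RtoC (r : R) : C := (r, 0).
Fixpoint Cpow (z : C) (n : nat) : C :=
  match n with O => C1 | S k => Cmul z (Cpow z k) end.

(* finite sum  f 0 + f 1 + ... + f n  (n+1 terms) *)
Fixpoint Csum_upto (n : nat) (f : nat -> C) : C :=
  match n with
  | O => f O
  | S k => Cadd (Csum_upto k f) (f (S k))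
  end.

Definition Idx (N : nat) : Type := {i : nat | (i < N)%nat}.
Definition Pt (N : nat) : Type := Idx N -> R.
Definition upd {N : nat} (x : Pt N) (i : Idx N) (t : R) : Pt N :=
  fun j => if Nat.eq_dec (proj1_sig j) (proj1_sig i) then t else x j.
Definition Fn (N : nat) : Type := Pt N -> C.

Definition is_partial {N : nat} (i : Idx N) (f g : Fn N) : Prop :=
  forall x : Pt N,
    derivable_pt_lim (fun t => fst (f (upd x i t))) (x i) (fst (g x)) /\
    derivable_pt_lim (fun t => snd (f (upd x i t))) (x i) (snd (g x)).

(* D l = iterated partial derivative  d_{l_1} d_{l_2} ... d_{l_k} f *)
Definition deriv_family {N : nat} (f : Fn N) (D : list (Idx N) -> Fn N) : Prop :=
  D [] = f /\ forall (l : list (Idx N)) (i : Idx N), is_partial i (D l) (D (i :: l)).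

Definition smooth {N : nat} (f : Fn N) : Prop := exists D, deriv_family f D.

Definition bidifferential {N : nat} (B : Fn N -> Fn N -> Fn N) : Prop :=
  exists terms : list (list (Idx N) * list (Idx N) * Fn N),
    (forall t, In t terms -> smooth (snd t)) /\
    forall (f g : Fn N) (Df Dg : list (Idx N) -> Fn N),
      deriv_family f Df -> deriv_family g Dg -> forall x : Pt N,
        B f g x =
        fold_right
          (fun t acc => match t with (K, L, c) =>
              Cadd (Cmul (c x) (Cmul (Df K x) (Dg L x))) acc end)
          C0 terms.

(* F m = coefficient of alpha^m *)
Definition Series (N : nat) : Type := nat -> Fn N.
Definition emb {N : nat} (f : Fn N) : Series N :=
  fun m => match m with O => f | S _ => fun _ => C0 end.
Definition Szero {N : nat} : Series N := fun _ _ => C0.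
Definition Sadd {N : nat} (F G : Series N) : Series N := fun m x => Cadd (F m x) (G m x).
Definition Ssub {N : nat} (F G : Series N) : Series N := fun m x => Cadd (F m x) (Copp (G m x)).
Definition Sscale {N : nat} (c : C) (F : Series N) : Series N := fun m x => Cmul c (F m x).
Definition Ssum {N : nat} (Fs : list (Series N)) : Series N := fold_right Sadd Szero Fs.

(* Cs r = C_r  (Cs 0 is ignored; C_0(f,g) = f g) *)
Definition Cfull {N : nat} (Cs : nat -> Fn N -> Fn N -> Fn N) (r : nat) (f g : Fn N) : Fn N :=
  match r with O => fun x => Cmul (f x) (g x) | S _ => Cs r f g end.

Definition is_star_product {N : nat} (Cs : nat -> Fn N -> Fn N -> Fn N) : Prop :=
  forall r : nat, (1 <= r)%nat -> bidifferential (Cs r).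

(* C[[alpha]]-bilinear extension of f * g = fg + sum_{r>=1} (i alpha)^r C_r(f,g):
   coefficient of alpha^m is sum_{a+b+r=m} i^r C_r(F_a, G_b) *)
Definition star {N : nat} (Cs : nat -> Fn N -> Fn N -> Fn N) (F G : Series N) : Series N :=
  fun m x =>
    Csum_upto m (fun a =>
      Csum_upto (m - a) (fun b =>
        Cmul (Cpow Ci (m - a - b)) (Cfull Cs (m - a - b) (F a) (G b) x))).

Definition assoc {N : nat} (Cs : nat -> Fn N -> Fn N -> Fn N) (F G H : Series N) : Series N :=
  Ssub (star Cs F (star Cs G H)) (star Cs (star Cs F G) H).

Definition coord {N : nat} (i : Idx N) : Fn N := fun x => RtoC (x i).
Definition one {N : nat} : Fn N := fun _ => C1.
Definition monomial {N : nat} (l : list (Idx N)) : Fn N :=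
  fun x => RtoC (fold_right (fun i acc => x i * acc) 1 l).

Fixpoint ins {A : Type} (a : A) (l : list A) : list (list A) :=
  match l with
  | [] => [[a]]
  | b :: l' => (a :: b :: l') :: map (cons b) (ins a l')
  end.
(* all n! rearrangements [l_{s(1)}; ...; l_{s(n)}], s in S_n (with multiplicity) *)
Fixpoint perms {A : Type} (l : list A) : list (list A) :=
  match l with
  | [] => [[]]
  | a :: l' => flat_map (ins a) (perms l')
  end.

Definition iter_star {N : nat} (Cs : nat -> Fn N -> Fn N -> Fn N) (l : list (Idx N)) (F : Series N)
  : Series N :=
  fold_right (fun i acc => star Cs (emb (coord i)) acc) F l.

(* list of pairs (l_k, l with the k-th entry removed), k = 1..n *)
Fixpoint picks {A : Type} (l : list A) : list (A * list A) :=
  match l with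
  | [] => []
  | a :: l' => (a, l') :: map (fun p => (fst p, a :: snd p)) (picks l')
  end.

Definition weyl {N : nat} (Cs : nat -> Fn N -> Fn N -> Fn N) : Prop :=
  forall l : list (Idx N), (1 <= length l)%nat ->
  forall f : Fn N, smooth f ->
  forall (m : nat) (x : Pt N),
    star Cs (emb (monomial l)) (emb f) m x =
    Sscale (RtoC (/ INR (fact (length l))))
           (Ssum (map (fun s => iter_star Cs s (emb f)) (perms l))) m x.

Definition unity_stable {N : nat} (Cs : nat -> Fn N -> Fn N -> Fn N) : Prop :=
  forall f : Fn N, smooth f ->
  forall (m : nat) (x : Pt N),
    star Cs (emb f) (emb one) m x = emb f m x /\
    star Cs (emb one) (emb f) m x = emb f m x.

(* Main.v *)
Require Import Defs.
From Stdlib Require Import Reals List Arith Lia Lra.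
From Stdlib Require Import Permutation FunctionalExtensionality ClassicalEpsilon ProofIrrelevance.
Import ListNotations.
Import Defs.
Open Scope R_scope.

Ltac Cring := unfold Cadd, Cmul, Copp, C0, C1, RtoC; apply injective_projections; simpl; ring.
Ltac fe := apply functional_extensionality; intro.

Lemma dpl_eq f x l l' : derivable_pt_lim f x l -> l = l' -> derivable_pt_lim f x l'.
Proof. intros H <-; exact H. Qed.

Lemma upd_same {N} (x : Pt N) i : upd x i (x i) = x.
Proof.
  apply functional_extensionality; intro j; unfold upd.
  destruct (Nat.eq_dec (proj1_sig j) (proj1_sig i)) as [e|]; [|reflexivity].
  destruct i as [i Hi], j as [j Hj]; simpl in e; subst j.
  rewrite (proof_irrelevance _ Hi Hj); reflexivity.
Qed.

Lemma is_partial_const {N} (i : Idx N) (c : C) : is_partial i (fun _ => c) (fun _ => C0).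
Proof. intro x; split; apply derivable_pt_lim_const. Qed.

Lemma is_partial_add {N} (i : Idx N) f g f' g' : is_partial i f f' -> is_partial i g g' ->
  is_partial i (fun x => Cadd (f x) (g x)) (fun x => Cadd (f' x) (g' x)).
Proof. intros Hf Hg x; destruct (Hf x) as [Hf1 Hf2]; destruct (Hg x) as [Hg1 Hg2]; split;
  [exact (derivable_pt_lim_plus _ _ _ _ _ Hf1 Hg1) | exact (derivable_pt_lim_plus _ _ _ _ _ Hf2 Hg2)]. Qed.

Lemma is_partial_mul {N} (i : Idx N) f g f' g' : is_partial i f f' -> is_partial i g g' ->
  is_partial i (fun x => Cmul (f x) (g x)) (fun x => Cadd (Cmul (f' x) (g x)) (Cmul (f x) (g' x))).
Proof.
  intros Hf Hg x; destruct (Hf x) as [Hf1 Hf2]; destruct (Hg x) as [Hg1 Hg2]; split.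
  - pose proof (derivable_pt_lim_minus _ _ _ _ _ (derivable_pt_lim_mult _ _ _ _ _ Hf1 Hg1)
      (derivable_pt_lim_mult _ _ _ _ _ Hf2 Hg2)) as H.
    cbv beta in H; rewrite upd_same in H.
    eapply dpl_eq; [exact H|]. unfold Cadd, Cmul; simpl; ring.
  - pose proof (derivable_pt_lim_plus _ _ _ _ _ (derivable_pt_lim_mult _ _ _ _ _ Hf1 Hg2)
      (derivable_pt_lim_mult _ _ _ _ _ Hf2 Hg1)) as H.
    cbv beta in H; rewrite upd_same in H.
    eapply dpl_eq; [exact H|]. unfold Cadd, Cmul; simpl; ring.
Qed.

Lemma is_partial_ext {N} (i : Idx N) f g g' : is_partial i f g -> (forall x, g x = g' x) -> is_partial i f g'.
Proof. intros H E. replace g' with g; [exact H|]. fe; apply E. Qed.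

Lemma coind_smooth {N} (Q : Fn N -> Prop)
  (step : forall h, Q h -> forall i, exists g, is_partial i h g /\ Q g) (h : Fn N) : Q h -> smooth h.
Proof.
  intro Hh.
  assert (st : forall h (_ : Q h) (i : Idx N), {g | is_partial i h g /\ Q g})
    by (intros; apply constructive_indefinite_description; auto).
  set (F := fix F (l : list (Idx N)) : {g | Q g} :=
    match l with
    | [] => exist _ h Hh
    | i :: l' => exist _ (proj1_sig (st _ (proj2_sig (F l')) i)) (proj2 (proj2_sig (st _ (proj2_sig (F l')) i)))
    end).
  exists (fun l => proj1_sig (F l)); split; [reflexivity|].
  intros l i. exact (proj1 (proj2_sig (st _ (proj2_sig (F l)) i))).
Qed.

Lemma smooth_D {N} (f : Fn N) D : deriv_family f D -> forall K, smooth (D K).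
Proof. intros [H0 H1] K. exists (fun l => D (l ++ K)); split; [reflexivity|]. intros l i; exact (H1 (l ++ K) i). Qed.

Lemma smooth_partial {N} (f : Fn N) : smooth f -> forall i, exists g, is_partial i f g /\ smooth g.
Proof. intros [D [H0 H1]] i. exists (D [i]). split. rewrite <- H0. apply H1. apply (smooth_D f D); split; auto. Qed.

Lemma smooth_const {N} (c : C) : smooth (N:=N) (fun _ => c).
Proof. apply (coind_smooth (fun h => exists c, h = fun _ => c)); [|eauto].
  intros h [c' ->] i. exists (fun _ => C0); split; [apply is_partial_const | eauto]. Qed.

Lemma smooth_add {N} (f g : Fn N) : smooth f -> smooth g -> smooth (fun x => Cadd (f x) (g x)).
Proof. intros [Df [Hf0 Hf1]] [Dg [Hg0 Hg1]].
  exists (fun l x => Cadd (Df l x) (Dg l x)); split.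
  - cbv beta; rewrite Hf0, Hg0; reflexivity.
  - intros l i; apply (is_partial_add i (Df l) (Dg l)); auto.
Qed.

Lemma smooth_ext {N} (h h' : Fn N) : (forall x, h x = h' x) -> smooth h' -> smooth h.
Proof. intros E H. replace h with h'; auto. fe; symmetry; apply E. Qed.

Definition pfold {N} (ps : list (Fn N * Fn N)) : Fn N :=
  fun x => fold_right (fun p acc => Cadd (Cmul (fst p x) (snd p x)) acc) C0 ps.

Lemma pfold_step {N} (ps : list (Fn N * Fn N)) : (forall p, In p ps -> smooth (fst p) /\ smooth (snd p)) ->
  forall i, exists ps', (forall p, In p ps' -> smooth (fst p) /\ smooth (snd p)) /\ is_partial i (pfold ps) (pfold ps').
Proof.
  induction ps as [|[u v] ps IH]; intros Hps i.
  - exists []; split; [intros p []|]. unfold pfold; simpl. apply is_partial_const.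
  - destruct (Hps (u,v) (or_introl eq_refl)) as [Hu Hv]; simpl in Hu, Hv.
    destruct (smooth_partial u Hu i) as [u' [Hu' Su']].
    destruct (smooth_partial v Hv i) as [v' [Hv' Sv']].
    destruct IH with (i := i) as [ps' [Hps' Hd]]. { intros p Hp; apply Hps; right; exact Hp. }
    exists ((u',v) :: (u,v') :: ps'); split.
    + intros p [<-|[<-|Hp]]; simpl; auto.
    + pose proof (is_partial_add i _ _ _ _ (is_partial_mul i u v u' v' Hu' Hv') Hd) as H.
      eapply is_partial_ext; [exact H|]. intro x; unfold pfold; simpl; Cring.
Qed.

Lemma smooth_mul {N} (f g : Fn N) : smooth f -> smooth g -> smooth (fun x => Cmul (f x) (g x)).
Proof. intros Hf Hg.
  apply (coind_smooth (fun h => exists ps, (forall p, In p ps -> smooth (fst p) /\ smooth (snd p)) /\ h = pfold ps)).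
  - intros h [ps [Hps ->]] i. destruct (pfold_step ps Hps i) as [ps' [H1 H2]]. exists (pfold ps'); eauto.
  - exists [(f,g)]; split. intros p [<-|[]]; auto. fe; unfold pfold; simpl; Cring.
Qed.

Lemma smooth_coord {N} (i : Idx N) : smooth (coord i).
Proof.
  apply (coind_smooth (fun h => (exists j, h = coord j) \/ exists c, h = fun _ => c)); [|eauto].
  intros h [[j ->]|[c ->]] k.
  - exists (fun _ => if Nat.eq_dec (proj1_sig j) (proj1_sig k) then C1 else C0); split; [|eauto].
    intro x; unfold coord, RtoC, upd; simpl.
    destruct (Nat.eq_dec (proj1_sig j) (proj1_sig k)); simpl; split;
      first [apply derivable_pt_lim_id | apply derivable_pt_lim_const].
  - exists (fun _ => C0); split; [apply is_partial_const|eauto].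
Qed.

Lemma smooth_monomial {N} (l : list (Idx N)) : smooth (monomial l).
Proof. induction l as [|i l IH].
  - exact (smooth_const C1).
  - apply (smooth_ext _ (fun x => Cmul (coord i x) (monomial l x))).
    + intro x; unfold monomial, coord; simpl; Cring.
    + apply smooth_mul; auto using smooth_coord.
Qed.

Lemma deriv_family_lin {N} (f1 f2 : Fn N) D1 D2 c1 c2 : deriv_family f1 D1 -> deriv_family f2 D2 ->
  deriv_family (fun x => Cadd (Cmul c1 (f1 x)) (Cmul c2 (f2 x))) (fun l x => Cadd (Cmul c1 (D1 l x)) (Cmul c2 (D2 l x))).
Proof. intros [H10 H11] [H20 H21]; split.
  - cbv beta; rewrite H10, H20; reflexivity.
  - intros l i. pose proof (is_partial_add i _ _ _ _ (is_partial_mul i _ _ _ _ (is_partial_const i c1) (H11 l i))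
        (is_partial_mul i _ _ _ _ (is_partial_const i c2) (H21 l i))) as H.
    eapply is_partial_ext; [exact H|]. intro x; cbv beta; Cring.
Qed.

Lemma fold_lin_l {N} (terms : list (list (Idx N) * list (Idx N) * Fn N)) (A B G : list (Idx N) -> Fn N) c1 c2 x :
  fold_right (fun t acc => match t with (K, L, c) => Cadd (Cmul (c x) (Cmul (Cadd (Cmul c1 (A K x)) (Cmul c2 (B K x))) (G L x))) acc end) C0 terms
  = Cadd (Cmul c1 (fold_right (fun t acc => match t with (K, L, c) => Cadd (Cmul (c x) (Cmul (A K x) (G L x))) acc end) C0 terms))
         (Cmul c2 (fold_right (fun t acc => match t with (K, L, c) => Cadd (Cmul (c x) (Cmul (B K x) (G L x))) acc end) C0 terms)).
Proof. induction terms as [|[[K L] c] ts IH]; simpl; [Cring|]. rewrite IH. Cring. Qed.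

Lemma fold_lin_r {N} (terms : list (list (Idx N) * list (Idx N) * Fn N)) (A B G : list (Idx N) -> Fn N) c1 c2 x :
  fold_right (fun t acc => match t with (K, L, c) => Cadd (Cmul (c x) (Cmul (G K x) (Cadd (Cmul c1 (A L x)) (Cmul c2 (B L x))))) acc end) C0 terms
  = Cadd (Cmul c1 (fold_right (fun t acc => match t with (K, L, c) => Cadd (Cmul (c x) (Cmul (G K x) (A L x))) acc end) C0 terms))
         (Cmul c2 (fold_right (fun t acc => match t with (K, L, c) => Cadd (Cmul (c x) (Cmul (G K x) (B L x))) acc end) C0 terms)).
Proof. induction terms as [|[[K L] c] ts IH]; simpl; [Cring|]. rewrite IH. Cring. Qed.

Lemma bilin_l {N} (B : Fn N -> Fn N -> Fn N) : bidifferential B -> forall f1 f2 g c1 c2, smooth f1 -> smooth f2 -> smooth g ->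
  forall x, B (fun x => Cadd (Cmul c1 (f1 x)) (Cmul c2 (f2 x))) g x = Cadd (Cmul c1 (B f1 g x)) (Cmul c2 (B f2 g x)).
Proof. intros [terms [_ HB]] f1 f2 g c1 c2 [D1 H1] [D2 H2] [Dg Hg] x.
  rewrite (HB _ _ _ _ (deriv_family_lin f1 f2 D1 D2 c1 c2 H1 H2) Hg x), (HB _ _ _ _ H1 Hg x), (HB _ _ _ _ H2 Hg x).
  exact (fold_lin_l terms D1 D2 Dg c1 c2 x).
Qed.

Lemma bilin_r {N} (B : Fn N -> Fn N -> Fn N) : bidifferential B -> forall g f1 f2 c1 c2, smooth f1 -> smooth f2 -> smooth g ->
  forall x, B g (fun x => Cadd (Cmul c1 (f1 x)) (Cmul c2 (f2 x))) x = Cadd (Cmul c1 (B g f1 x)) (Cmul c2 (B g f2 x)).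
Proof. intros [terms [_ HB]] g f1 f2 c1 c2 [D1 H1] [D2 H2] [Dg Hg] x.
  rewrite (HB _ _ _ _ Hg (deriv_family_lin f1 f2 D1 D2 c1 c2 H1 H2) x), (HB _ _ _ _ Hg H1 x), (HB _ _ _ _ Hg H2 x).
  exact (fold_lin_r terms D1 D2 Dg c1 c2 x).
Qed.

Lemma Cfull_lin_l {N} Cs (HS : is_star_product (N:=N) Cs) r f1 f2 g c1 c2 : smooth f1 -> smooth f2 -> smooth g -> forall x,
  Cfull Cs r (fun x => Cadd (Cmul c1 (f1 x)) (Cmul c2 (f2 x))) g x = Cadd (Cmul c1 (Cfull Cs r f1 g x)) (Cmul c2 (Cfull Cs r f2 g x)).
Proof. intros H1 H2 Hg x. destruct r as [|r]; simpl. - Cring. - apply bilin_l; auto. apply HS; lia. Qed.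

Lemma Cfull_lin_r {N} Cs (HS : is_star_product (N:=N) Cs) r f1 f2 g c1 c2 : smooth f1 -> smooth f2 -> smooth g -> forall x,
  Cfull Cs r g (fun x => Cadd (Cmul c1 (f1 x)) (Cmul c2 (f2 x))) x = Cadd (Cmul c1 (Cfull Cs r g f1 x)) (Cmul c2 (Cfull Cs r g f2 x)).
Proof. intros H1 H2 Hg x. destruct r as [|r]; simpl. - Cring. - apply bilin_r; auto. apply HS; lia. Qed.

Lemma Csum_lin n (w u v : nat -> C) c1 c2 : (forall k, w k = Cadd (Cmul c1 (u k)) (Cmul c2 (v k))) ->
  Csum_upto n w = Cadd (Cmul c1 (Csum_upto n u)) (Cmul c2 (Csum_upto n v)).
Proof. intro H; induction n; simpl. - apply H. - rewrite IHn, H; Cring. Qed.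

Definition SS {N} (G : Series N) := forall m, smooth (G m).

Lemma star_lin_l {N} Cs (HS : is_star_product (N:=N) Cs) G1 G2 F c1 c2 : SS G1 -> SS G2 -> SS F ->
  star Cs (fun m x => Cadd (Cmul c1 (G1 m x)) (Cmul c2 (G2 m x))) F
  = fun m x => Cadd (Cmul c1 (star Cs G1 F m x)) (Cmul c2 (star Cs G2 F m x)).
Proof. intros H1 H2 HF. fe; fe. unfold star. cbv beta.
  apply Csum_lin; intro a; cbv beta. apply Csum_lin; intro b; cbv beta.
  rewrite (Cfull_lin_l Cs HS _ (G1 a) (G2 a) (F b) c1 c2 (H1 a) (H2 a) (HF b)). Cring.
Qed.

Lemma star_lin_r {N} Cs (HS : is_star_product (N:=N) Cs) G1 G2 F c1 c2 : SS G1 -> SS G2 -> SS F ->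
  star Cs F (fun m x => Cadd (Cmul c1 (G1 m x)) (Cmul c2 (G2 m x)))
  = fun m x => Cadd (Cmul c1 (star Cs F G1 m x)) (Cmul c2 (star Cs F G2 m x)).
Proof. intros H1 H2 HF. fe; fe. unfold star. cbv beta.
  apply Csum_lin; intro a; cbv beta. apply Csum_lin; intro b; cbv beta.
  rewrite (Cfull_lin_r Cs HS _ (G1 b) (G2 b) (F a) c1 c2 (H1 b) (H2 b) (HF a)). Cring.
Qed.

Lemma smooth_fold {N} (terms : list (list (Idx N) * list (Idx N) * Fn N)) (A G : list (Idx N) -> Fn N) :
  (forall t, In t terms -> smooth (snd t)) -> (forall K, smooth (A K)) -> (forall K, smooth (G K)) ->
  smooth (fun x => fold_right (fun t acc => match t with (K, L, c) => Cadd (Cmul (c x) (Cmul (A K x) (G L x))) acc end) C0 terms).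
Proof. intros Ht HA HG. induction terms as [|[[K L] c] ts IH]; simpl.
  - apply smooth_const.
  - apply smooth_add. apply smooth_mul. exact (Ht (K,L,c) (or_introl eq_refl)). apply smooth_mul; auto.
    apply IH. intros; apply Ht; right; auto.
Qed.

Lemma smooth_Cfull {N} Cs (HS : is_star_product (N:=N) Cs) r f g : smooth f -> smooth g -> smooth (Cfull Cs r f g).
Proof. intros Hf Hg. destruct r as [|r]; simpl. - apply smooth_mul; auto.
  - destruct (HS (S r) ltac:(lia)) as [terms [Ht HB]]. destruct Hf as [Df Hf], Hg as [Dg Hg].
    eapply smooth_ext; [intro x; apply (HB f g Df Dg Hf Hg x)|].
    apply smooth_fold; auto; intro K; eapply smooth_D; eauto.
Qed.

Lemma smooth_Csum {N} n (h : nat -> Fn N) : (forall k, smooth (h k)) -> smooth (fun x => Csum_upto n (fun k => h k x)).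
Proof. intro H; induction n; simpl. exact (H 0%nat). apply smooth_add; auto. Qed.

Lemma SS_star {N} Cs (HS : is_star_product (N:=N) Cs) F G : SS F -> SS G -> SS (star Cs F G).
Proof. intros HF HG m. unfold star.
  apply (smooth_Csum m (fun a x => Csum_upto (m - a) (fun b => Cmul (Cpow Ci (m - a - b)) (Cfull Cs (m - a - b) (F a) (G b) x)))).
  intro a. apply (smooth_Csum (m-a) (fun b x => Cmul (Cpow Ci (m - a - b)) (Cfull Cs (m - a - b) (F a) (G b) x))).
  intro b. apply smooth_mul. apply smooth_const. apply smooth_Cfull; auto.
Qed.

Lemma SS_emb {N} (f : Fn N) : smooth f -> SS (emb f).
Proof. intros H [|m]; simpl; auto. exact (smooth_const C0). Qed.

Lemma SS_iter {N} Cs (HS : is_star_product (N:=N) Cs) s F : SS F -> SS (iter_star Cs s F).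
Proof. intro HF; induction s as [|i s IH]; [exact HF|]. apply (SS_star Cs HS); auto. apply SS_emb, smooth_coord. Qed.

Lemma SS_Szero {N} : SS (N:=N) Szero.
Proof. intro m; exact (smooth_const C0). Qed.

Lemma SS_Sadd {N} (F G : Series N) : SS F -> SS G -> SS (Sadd F G).
Proof. intros HF HG m; apply smooth_add; auto. Qed.

Lemma SS_Sscale {N} c (F : Series N) : SS F -> SS (Sscale c F).
Proof. intros HF m; apply (smooth_mul (fun _ => c)); auto; apply smooth_const. Qed.

Lemma SS_Ssum {N} {A} (h : A -> Series N) L : (forall a, In a L -> SS (h a)) -> SS (Ssum (map h L)).
Proof. induction L as [|a L IH]; intro H; simpl. apply SS_Szero. apply SS_Sadd; auto. apply H; left; auto.
  apply IH; intros; apply H; right; auto. Qed.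

Lemma star_add_l {N} Cs (HS : is_star_product (N:=N) Cs) G H F : SS G -> SS H -> SS F ->
  star Cs (Sadd G H) F = Sadd (star Cs G F) (star Cs H F).
Proof. intros. replace (Sadd G H) with (fun m x => Cadd (Cmul C1 (G m x)) (Cmul C1 (H m x))).
  rewrite star_lin_l; auto. fe; fe; unfold Sadd; Cring. fe; fe; unfold Sadd; Cring. Qed.

Lemma star_add_r {N} Cs (HS : is_star_product (N:=N) Cs) G H F : SS G -> SS H -> SS F ->
  star Cs F (Sadd G H) = Sadd (star Cs F G) (star Cs F H).
Proof. intros. replace (Sadd G H) with (fun m x => Cadd (Cmul C1 (G m x)) (Cmul C1 (H m x))).
  rewrite star_lin_r; auto. fe; fe; unfold Sadd; Cring. fe; fe; unfold Sadd; Cring. Qed.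

Lemma star_scale_l {N} Cs (HS : is_star_product (N:=N) Cs) c G F : SS G -> SS F ->
  star Cs (Sscale c G) F = Sscale c (star Cs G F).
Proof. intros. replace (Sscale c G) with (fun m x => Cadd (Cmul c (G m x)) (Cmul C0 (G m x))).
  rewrite star_lin_l; auto. fe; fe; unfold Sscale; Cring. fe; fe; unfold Sscale; Cring. Qed.

Lemma star_scale_r {N} Cs (HS : is_star_product (N:=N) Cs) c G F : SS G -> SS F ->
  star Cs F (Sscale c G) = Sscale c (star Cs F G).
Proof. intros. replace (Sscale c G) with (fun m x => Cadd (Cmul c (G m x)) (Cmul C0 (G m x))).
  rewrite star_lin_r; auto. fe; fe; unfold Sscale; Cring. fe; fe; unfold Sscale; Cring. Qed.

Lemma star_zero_l {N} Cs (HS : is_star_product (N:=N) Cs) F : SS F -> star Cs Szero F = Szero.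
Proof. intros. replace (@Szero N) with (fun m x => Cadd (Cmul C0 (@Szero N m x)) (Cmul C0 (@Szero N m x))) at 1.
  rewrite star_lin_l; auto using SS_Szero. fe; fe; unfold Szero; Cring. fe; fe; unfold Szero; Cring. Qed.

Lemma star_zero_r {N} Cs (HS : is_star_product (N:=N) Cs) F : SS F -> star Cs F Szero = Szero.
Proof. intros. replace (@Szero N) with (fun m x => Cadd (Cmul C0 (@Szero N m x)) (Cmul C0 (@Szero N m x))) at 1.
  rewrite star_lin_r; auto using SS_Szero. fe; fe; unfold Szero; Cring. fe; fe; unfold Szero; Cring. Qed.

Lemma star_Ssum_l {N} {A} Cs (HS : is_star_product (N:=N) Cs) (h : A -> Series N) L F :
  (forall a, In a L -> SS (h a)) -> SS F -> star Cs (Ssum (map h L)) F = Ssum (map (fun a => star Cs (h a) F) L).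
Proof. intros H HF; induction L as [|a L IH]; simpl. apply star_zero_l; auto.
  rewrite star_add_l, IH; auto. intros; apply H; right; auto. apply H; left; auto.
  apply SS_Ssum; intros; apply H; right; auto. Qed.

Lemma star_Ssum_r {N} {A} Cs (HS : is_star_product (N:=N) Cs) (h : A -> Series N) L F :
  (forall a, In a L -> SS (h a)) -> SS F -> star Cs F (Ssum (map h L)) = Ssum (map (fun a => star Cs F (h a)) L).
Proof. intros H HF; induction L as [|a L IH]; simpl. apply star_zero_r; auto.
  rewrite star_add_r, IH; auto. intros; apply H; right; auto. apply H; left; auto.
  apply SS_Ssum; intros; apply H; right; auto. Qed.

Lemma Ssum_app {N} (L1 L2 : list (Series N)) : Ssum (L1 ++ L2) = Sadd (Ssum L1) (Ssum L2).
Proof. induction L1 as [|a L IH]; simpl. fe; fe; unfold Sadd, Szero; Cring.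
  unfold Ssum in *; simpl; rewrite IH. fe; fe; unfold Sadd; Cring. Qed.

Lemma Ssum_perm {N} (L1 L2 : list (Series N)) : Permutation L1 L2 -> Ssum L1 = Ssum L2.
Proof. induction 1; simpl; auto. unfold Ssum in *; simpl; rewrite IHPermutation; auto.
  fe; fe; unfold Sadd; Cring. congruence. Qed.

Lemma Ssum_flat {N} {A B} (g : B -> Series N) (h : A -> list B) L :
  Ssum (map g (flat_map h L)) = Ssum (map (fun a => Ssum (map g (h a))) L).
Proof. induction L as [|a L IH]; simpl; auto. rewrite map_app, Ssum_app, IH; reflexivity. Qed.

Lemma Ssum_scale {N} {A} c (h : A -> Series N) L :
  Ssum (map (fun a => Sscale c (h a)) L) = Sscale c (Ssum (map h L)).
Proof. induction L as [|a L IH]; simpl. fe; fe; unfold Sscale, Szero; Cring.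
  unfold Ssum in *; simpl; rewrite IH. fe; fe; unfold Sadd, Sscale; Cring. Qed.

Lemma Ssum_sub {N} {A} (h1 h2 : A -> Series N) L :
  Ssum (map (fun a => Ssub (h1 a) (h2 a)) L) = Ssub (Ssum (map h1 L)) (Ssum (map h2 L)).
Proof. induction L as [|a L IH]; simpl. fe; fe; unfold Ssub, Szero; Cring.
  unfold Ssum in *; simpl; rewrite IH. fe; fe; unfold Sadd, Ssub; Cring. Qed.

Lemma Sscale_Sscale {N} c d (G : Series N) : Sscale c (Sscale d G) = Sscale (Cmul c d) G.
Proof. fe; fe; unfold Sscale; Cring. Qed.

Lemma flat_map_app_perm {A B} (F G : A -> list B) L :
  Permutation (flat_map (fun x => F x ++ G x) L) (flat_map F L ++ flat_map G L).
Proof. induction L as [|a L IH]; simpl; auto.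
  rewrite IH. rewrite <- !app_assoc. apply Permutation_app_head. apply Permutation_app_swap_app. Qed.

Lemma flat_map_perm_pw {A B} (F G : A -> list B) L : (forall x, Permutation (F x) (G x)) ->
  Permutation (flat_map F L) (flat_map G L).
Proof. intro H; induction L; simpl; auto. apply Permutation_app; auto. Qed.

Lemma flat_map_flat_map {A B D} (f : B -> list D) (g : A -> list B) L :
  flat_map f (flat_map g L) = flat_map (fun x => flat_map f (g x)) L.
Proof. induction L; simpl; auto. rewrite flat_map_app; congruence. Qed.

Lemma flat_map_map' {A B D} (f : B -> list D) (g : A -> B) L :
  flat_map f (map g L) = flat_map (fun x => f (g x)) L.
Proof. induction L; simpl; congruence. Qed.

Lemma map_flat_map' {A B D} (f : B -> D) (g : A -> list B) L :
  map f (flat_map g L) = flat_map (fun x => map f (g x)) L.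
Proof. induction L; simpl; auto. rewrite map_app; congruence. Qed.

Lemma flat_map_single {A B} (u : A -> B) L : flat_map (fun s => [u s]) L = map u L.
Proof. induction L; simpl; congruence. Qed.

Lemma perms_picks {A} (l : list A) : l <> [] ->
  Permutation (perms l) (flat_map (fun p => map (cons (fst p)) (perms (snd p))) (picks l)).
Proof.
  induction l as [|a l IH]; intro Hne; [congruence|].
  destruct l as [|b l0]; [simpl; reflexivity|].
  specialize (IH ltac:(discriminate)).
  remember (b :: l0) as l eqn:El. simpl.
  set (h := fun p : A * list A => map (cons (fst p)) (perms (snd p))) in *.
  set (X := fun p : A * list A => flat_map (fun s => [a :: fst p :: s]) (perms (snd p))).
  set (Y := fun p : A * list A => flat_map (fun s => map (cons (fst p)) (ins a s)) (perms (snd p))).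
  transitivity (flat_map X (picks l) ++ flat_map Y (picks l)).
  - rewrite IH, flat_map_flat_map.
    rewrite <- flat_map_app_perm. apply flat_map_perm_pw; intro p.
    unfold h, X, Y. rewrite flat_map_map'. rewrite <- flat_map_app_perm. reflexivity.
  - rewrite flat_map_map'. simpl.
    apply Permutation_app.
    + rewrite IH, map_flat_map'. apply flat_map_perm_pw; intro p. unfold h, X.
      rewrite flat_map_single, map_map. reflexivity.
    + apply flat_map_perm_pw; intro p. unfold h, Y; simpl. rewrite map_flat_map'. reflexivity.
Qed.

Lemma picks_len {A} (l : list A) p : In p (picks l) -> S (length (snd p)) = length l.
Proof. revert p; induction l as [|a l IH]; simpl; intros p H; [contradiction|].
  destruct H as [<-|H]; simpl; auto. apply in_map_iff in H. destruct H as [q [<- Hq]]; simpl.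
  rewrite (IH q Hq); reflexivity. Qed.

Lemma weyl_series {N} Cs (Hw : weyl (N:=N) Cs) l f : (1 <= length l)%nat -> smooth f ->
  star Cs (emb (monomial l)) (emb f) =
  Sscale (RtoC (/ INR (fact (length l)))) (Ssum (map (fun s => iter_star Cs s (emb f)) (perms l))).
Proof. intros H1 H2; fe; fe; apply Hw; auto. Qed.

Lemma key {N} Cs (HS : is_star_product (N:=N) Cs) (Hweyl : weyl Cs) l (Hn : (2 <= length l)%nat) g (Hg : smooth g) :
  Ssum (map (fun p => star Cs (emb (coord (fst p))) (star Cs (emb (monomial (snd p))) (emb g))) (picks l))
  = Sscale (RtoC (INR (length l))) (star Cs (emb (monomial l)) (emb g)).
Proof.
  set (I := fun s => iter_star Cs s (emb g)).
  set (c' := RtoC (/ INR (fact (length l - 1)))).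
  rewrite (map_ext_in _ (fun p => Sscale c' (Ssum (map (fun s => I (fst p :: s)) (perms (snd p)))))).
  2:{ intros p Hp. pose proof (picks_len l p Hp) as Hl.
      rewrite (weyl_series Cs Hweyl (snd p) g); [|lia|auto].
      rewrite star_scale_r; auto.
      2:{ apply SS_Ssum; intros; apply SS_iter; auto; apply SS_emb; auto. }
      2:{ apply SS_emb, smooth_coord. }
      rewrite star_Ssum_r; auto.
      2:{ intros; apply SS_iter; auto; apply SS_emb; auto. }
      2:{ apply SS_emb, smooth_coord. }
      unfold c'. replace (length l - 1)%nat with (length (snd p)) by lia. reflexivity. }
  rewrite Ssum_scale.
  assert (E : Ssum (map (fun p => Ssum (map (fun s => I (fst p :: s)) (perms (snd p)))) (picks l))
              = Ssum (map I (perms l))).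
  { rewrite (Ssum_perm (map I (perms l)) _ (Permutation_map I (perms_picks l ltac:(destruct l; simpl in *; [lia|discriminate])))).
    rewrite Ssum_flat. f_equal. apply map_ext; intro p. rewrite map_map. reflexivity. }
  rewrite E. rewrite (weyl_series Cs Hweyl l g); [|lia|auto]. fold I.
  rewrite Sscale_Sscale. f_equal. unfold c'.
  destruct (length l) as [|n]; [lia|]. rewrite fact_simpl, mult_INR. simpl (S n - 1)%nat. rewrite Nat.sub_0_r.
  pose proof (INR_fact_neq_0 n). assert (INR (S n) <> 0) by (apply not_0_INR; lia).
  unfold Cmul, RtoC; simpl. f_equal; field; auto.
Qed.

Theorem proposition2 (N : nat) (Cs : nat -> Fn N -> Fn N -> Fn N)
  (Hstar : is_star_product Cs) (Hweyl : weyl Cs) (Hunit : unity_stable Cs)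
  (l : list (Idx N)) (Hn : (2 <= length l)%nat)
  (f : Fn N) (Hf : smooth f) :
  forall (m : nat) (x : Pt N),
    Ssum (map (fun p => assoc Cs (emb (coord (fst p))) (emb (monomial (snd p))) (emb f))
              (picks l)) m x = C0.
Proof.
  assert (U : forall g, smooth g -> star Cs (emb g) (emb one) = emb g).
  { intros g Hg; fe; fe; apply Hunit; auto. }
  assert (Hone : smooth (N:=N) one) by exact (smooth_const C1).
  assert (E : Ssum (map (fun p => assoc Cs (emb (coord (fst p))) (emb (monomial (snd p))) (emb f)) (picks l)) = Szero).
  { unfold assoc. rewrite Ssum_sub. rewrite key; auto.
    assert (E2 : Ssum (map (fun p => star Cs (star Cs (emb (coord (fst p))) (emb (monomial (snd p)))) (emb f)) (picks l))
      = star Cs (Ssum (map (fun p => star Cs (emb (coord (fst p))) (emb (monomial (snd p)))) (picks l))) (emb f)).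
    { symmetry; apply star_Ssum_l; auto. intros; apply SS_star; auto; apply SS_emb; auto using smooth_coord, smooth_monomial.
      apply SS_emb; auto. }
    assert (E3 : Ssum (map (fun p => star Cs (emb (coord (fst p))) (emb (monomial (snd p)))) (picks l))
      = Sscale (RtoC (INR (length l))) (emb (monomial l))).
    { transitivity (Ssum (map (fun p => star Cs (emb (coord (fst p))) (star Cs (emb (monomial (snd p))) (emb one))) (picks l))).
      - f_equal; apply map_ext; intro p; rewrite U; auto using smooth_monomial.
      - rewrite key; auto. rewrite U; auto using smooth_monomial. }
    rewrite E2, E3. rewrite star_scale_l; auto. 2: apply SS_emb, smooth_monomial. 2: apply SS_emb; auto.
    fe; fe; unfold Ssub, Szero; Cring. }
  intros m x. rewrite E. reflexivity.
Qed.
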